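(* Let $(\mathcal V,\mathcal W,\lambda)$ be a FTvN system with $\dim(\mathcal V)\ge2$, and let $C$ be its center. Then $C=\{0\}$ under either of the following conditions: (i) for $x,y\in\mathcal V$, $\langle\lambda(x),\lambda(y)\rangle=0$ implies $x=0$ or $y=0$; (ii) for $x,y\in\mathcal V$, $0=\langle x,y\rangle=\langle\lambda(x),\lambda(y)\rangle$ implies $x=0$ or $y=0$.
   Context: A Fan-Theobald-von Neumann (FTvN) system is a triple $(\mathcal V,\mathcal W,\lambda)$ where $\mathcal V,\mathcal W$ are real inner product spaces and $\lambda:\mathcal V\to\mathcal W$ is a map such that: (A1) $\|\lambda(x)\|=\|x\|$ for all $x$; (A2) $\langle x,y\rangle\le\langle\lambda(x),\lambda(y)\rangle$ for all $x,y$; (A3) for every $c\in\mathcal V$ and $q\in\lambda(\mathcal V)$ there exists $x$ with $\lambda(x)=q$ and $\langle c,x\rangle=\langle\lambda(c),\lambda(x)\rangle$. Elements $x,y$ commute if $\langle x,y\rangle=\langle\lambda(x),\lambda(y)\rangle$; the center $C$ is the set of elements commuting with every element of $\mathcal V$. *)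

(* Defs.v *)
From HB Require Import structures.
From mathcomp Require Import all_boot all_order all_algebra.
From mathcomp Require Import reals.
Set Implicit Arguments. Unset Strict Implicit. Unset Printing Implicit Defensive.
Import Order.TTheory GRing.Theory Num.Theory.
Local Open Scope ring_scope.

Definition is_inner_product (R : realType) (V : lmodType R) (ip : V -> V -> R) : Prop :=
  [/\ (forall x y, ip x y = ip y x),
      (forall a x y z, ip (a *: x + y) z = a * ip x z + ip y z),
      (forall x, 0 <= ip x x) &
      (forall x, ip x x = 0 -> x = 0)].

Definition ipnorm (R : realType) (V : lmodType R) (ip : V -> V -> R) (x : V) : R :=
  Num.sqrt (ip x x).

Definition FTvN_system (R : realType) (V W : lmodType R)
  (ipV : V -> V -> R) (ipW : W -> W -> R) (lam : V -> W) : Prop :=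
  [/\ is_inner_product ipV, is_inner_product ipW,
      (forall x, ipnorm ipW (lam x) = ipnorm ipV x),
      (forall x y, ipV x y <= ipW (lam x) (lam y)) &
      (forall c q, (exists u, lam u = q) ->
         exists x, lam x = q /\ ipV c x = ipW (lam c) (lam x))].

Definition commute_ftvn (R : realType) (V W : lmodType R)
  (ipV : V -> V -> R) (ipW : W -> W -> R) (lam : V -> W) (x y : V) : Prop :=
  ipV x y = ipW (lam x) (lam y).

Definition in_center (R : realType) (V W : lmodType R)
  (ipV : V -> V -> R) (ipW : W -> W -> R) (lam : V -> W) (c : V) : Prop :=
  forall y, commute_ftvn ipV ipW lam c y.

Definition dim_ge2 (R : realType) (V : lmodType R) : Prop :=
  exists x y : V, forall a b : R, a *: x + b *: y = 0 -> a = 0 /\ b = 0.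

(* Main.v *)
Require Import Defs.
From HB Require Import structures.
From mathcomp Require Import all_boot all_order all_algebra.
From mathcomp Require Import reals.
From mathcomp Require Import lra.
Import Order.TTheory GRing.Theory Num.Theory.
Local Open Scope ring_scope.

Lemma ip0l (R : realType) (V : lmodType R) (ip : V -> V -> R) :
  is_inner_product ip -> forall z, ip 0 z = 0.
Proof.
case=> _ hl _ _ z; have := hl 1 0 0 z.
rewrite scaler0 addr0 mul1r => e.
by apply: (addrI (ip 0 z)); rewrite addr0 -e.
Qed.

Lemma ipl (R : realType) (V : lmodType R) (ip : V -> V -> R) :
  is_inner_product ip -> forall a b x y z,
  ip (a *: x + b *: y) z = a * ip x z + b * ip y z.
Proof.
move=> h a b x y z; have [_ hl _ _] := h.
by rewrite hl -[b *: y]addr0 hl ip0l // addr0.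
Qed.

Theorem proposition6p8 (R : realType) (V W : lmodType R)
  (ipV : V -> V -> R) (ipW : W -> W -> R) (lam : V -> W)
  (hsys : FTvN_system ipV ipW lam) (hdim : dim_ge2 V) :
  ((forall x y : V, ipW (lam x) (lam y) = 0 -> x = 0 \/ y = 0) \/
   (forall x y : V, ipV x y = 0 -> ipW (lam x) (lam y) = 0 -> x = 0 \/ y = 0)) ->
  forall c : V, in_center ipV ipW lam c <-> c = 0.
Proof.
have [hV hW hn _ _] := hsys.
move=> hc c; split; last first.
  move=> -> y; rewrite /commute_ftvn ip0l //.
  have l0 : lam 0 = 0.
    have := hn 0; rewrite /ipnorm ip0l // sqrtr0 => /eqP.
    rewrite sqrtr_eq0 => hle.
    have [_ _ hpos hdef] := hW; apply: hdef.
    by apply/eqP; rewrite eq_le hle hpos.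
  by rewrite l0 ip0l.
move=> hcen.
have [x1 [x2 hind]] := hdim.
have [hsym _ _ _] := hV.
have [y [ynz yc]] : exists y, y <> 0 /\ ipV c y = 0.
  case: (eqVneq (ipV c x1) 0) => h1.
    exists x1; split=> // e; have := hind 1 0; rewrite e scale0r scale1r addr0.
    by case=> // /eqP; rewrite oner_eq0.
  exists (ipV c x2 *: x1 + (- ipV c x1) *: x2); split.
    move=> e; have [_ /eqP] := hind _ _ e; rewrite oppr_eq0.
    by rewrite (negbTE h1).
  by rewrite hsym ipl // (hsym x1) (hsym x2); lra.
have yW : ipW (lam c) (lam y) = 0 by rewrite -hcen.
by case: hc => H; [case: (H c y yW) | case: (H c y yc yW)].
Qed.
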